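(* If two topological large scale spaces $X$ and $Y$ are coarsely equivalent, then $\mathrm{Ends}(X)$ is homeomorphic to $\mathrm{Ends}(Y)$.
   Context: A large scale space is a set $X$ with a family $\mathbb{LSS}$ of covers (uniformly bounded covers) such that $st(\mathcal U,\mathcal V)\in\mathbb{LSS}$ whenever $\mathcal U,\mathcal V\in\mathbb{LSS}$, and any cover each of whose elements lies in some element of a member of $\mathbb{LSS}$ is in $\mathbb{LSS}$; here $st(x,\mathcal U)$ is the union of elements of $\mathcal U$ containing $x$, $st(A,\mathcal U)=\bigcup_{x\in A}st(x,\mathcal U)$, $st(\mathcal U,\mathcal V)=\{st(A,\mathcal V):A\in\mathcal U\}$. Bounded sets are subsets of elements of uniformly bounded covers; the union of two bounded sets is assumed bounded. $A$ is coarsely clopen if $st(A,\mathcal U)\cap st(X\setminus A,\mathcal U)$ is bounded for every uniformly bounded $\mathcal U$. An end is a family of unbounded coarsely clopen sets maximal with respect to all finite intersections being unbounded; $\mathrm{Ends}(X)$ is the set of ends. A topological large scale space additionally has a topology for which some uniformly bounded cover consists of open sets; $\mathrm{Ends}(X)$ is topologized by the basis $U_{end}=\{E\in\mathrm{Ends}(X):U\in E\}$, $U$ ranging over open coarsely clopen subsets of $X$. For maps $\varphi,\varphi':X\to Y$ of large scale spaces: they are close if there is a uniformly bounded cover $\mathcal U$ of $Y$ with $\varphi(x)\in st(\varphi'(x),\mathcal U)$ for all $x$; $\varphi$ is coarse if preimages of bounded sets are bounded; $\varphi$ is large scale continuous if for every uniformly bounded cover $\mathcal U$ of $X$ the family $\varphi(\mathcal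 U)$ refines a uniformly bounded cover of $Y$. $\varphi$ is a coarse equivalence if it is coarse and large scale continuous and there is a coarse large scale continuous $\psi:Y\to X$ with $\psi\circ\varphi$ close to $\mathrm{id}_X$ and $\varphi\circ\psi$ close to $\mathrm{id}_Y$; $X,Y$ are then coarsely equivalent. *)

(* Defs.v *)
From Stdlib Require Import List.

Set Implicit Arguments.

Section Basics.
Variable X : Type.

Definition subset (A B : X -> Prop) : Prop := forall x, A x -> B x.

Definition is_cover (U : (X -> Prop) -> Prop) : Prop :=
  forall x, exists A, U A /\ A x.

Definition st_pt (x : X) (U : (X -> Prop) -> Prop) : X -> Prop :=
  fun y => exists A, U A /\ A x /\ A y.

Definition st_set (A : X -> Prop) (U : (X -> Prop) -> Prop) : X -> Prop :=
  fun y => exists x, A x /\ st_pt x U y.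

Definition st_cov (U V : (X -> Prop) -> Prop) : (X -> Prop) -> Prop :=
  fun B => exists A, U A /\ (forall y, B y <-> st_set A V y).

End Basics.

(* A large scale space structure on X: the family of uniformly bounded covers. *)
Record LSS (X : Type) := {
  ub : ((X -> Prop) -> Prop) -> Prop;
  ub_is_cover : forall U, ub U -> is_cover U;
  ub_star : forall U V, ub U -> ub V -> ub (st_cov U V);
  ub_refine : forall W, is_cover W ->
      (exists U, ub U /\ forall B, W B -> exists A, U A /\ subset B A) ->
      ub W;
  (* standing assumption: the union of two bounded sets is bounded *)
  ub_bounded_union : forall B1 B2 : X -> Prop,
      (exists U, ub U /\ exists A, U A /\ subset B1 A) ->
      (exists U, ub U /\ exists A, U A /\ subset B2 A) ->
      (exists U, ub U /\ exists A, U A /\ subset (fun x => B1 x \/ B2 x) A)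
}.

Section LSSnotions.
Variables (X : Type) (L : LSS X).

Definition bounded (B : X -> Prop) : Prop :=
  exists U, ub L U /\ exists A, U A /\ subset B A.

Definition coarsely_clopen (A : X -> Prop) : Prop :=
  forall U, ub L U ->
    bounded (fun x => st_set A U x /\ st_set (fun z => ~ A z) U x).

Definition big_inter (l : list (X -> Prop)) : X -> Prop :=
  fun x => Forall (fun A => A x) l.

Definition good_family (E : (X -> Prop) -> Prop) : Prop :=
  (forall A, E A -> coarsely_clopen A /\ ~ bounded A) /\
  (forall l, l <> nil -> Forall E l -> ~ bounded (big_inter l)).

Definition is_end (E : (X -> Prop) -> Prop) : Prop :=
  good_family E /\
  forall E', good_family E' -> (forall A, E A -> E' A) -> forall A, E' A -> E A.

End LSSnotions.

Section Maps.
Variables (X Y : Type) (LX : LSS X) (LY : LSS Y).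

Definition image (f : X -> Y) (A : X -> Prop) : Y -> Prop :=
  fun y => exists x, A x /\ f x = y.

Definition close (f g : X -> Y) : Prop :=
  exists U, ub LY U /\ forall x, st_pt (g x) U (f x).

Definition coarse (f : X -> Y) : Prop :=
  forall B, bounded LY B -> bounded LX (fun x => B (f x)).

Definition ls_continuous (f : X -> Y) : Prop :=
  forall U, ub LX U ->
    exists V, ub LY V /\ forall A, U A -> exists B, V B /\ subset (image f A) B.

End Maps.

Definition coarse_equivalence (X Y : Type) (LX : LSS X) (LY : LSS Y)
    (f : X -> Y) : Prop :=
  coarse LX LY f /\ ls_continuous LX LY f /\
  exists g : Y -> X, coarse LY LX g /\ ls_continuous LY LX g /\
    close LX (fun x => g (f x)) (fun x => x) /\
    close LY (fun y => f (g y)) (fun y => y).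

Definition coarsely_equivalent (X Y : Type) (LX : LSS X) (LY : LSS Y) : Prop :=
  exists f : X -> Y, coarse_equivalence LX LY f.

Record TopLSS := {
  tcar : Type;
  tlss : LSS tcar;
  topen : (tcar -> Prop) -> Prop;
  topen_full : topen (fun _ => True);
  topen_inter : forall A B, topen A -> topen B -> topen (fun x => A x /\ B x);
  topen_union : forall F : (tcar -> Prop) -> Prop, (forall A, F A -> topen A) ->
      topen (fun x => exists A, F A /\ A x);
  topen_ub : exists U, ub tlss U /\ forall A, U A -> topen A
}.

Definition Ends (X : TopLSS) : Type :=
  { E : (tcar X -> Prop) -> Prop | is_end (tlss X) E }.

Definition basic_end_open (X : TopLSS) (U : tcar X -> Prop) : Ends X -> Prop :=
  fun E => proj1_sig E U.

Definition ends_open (X : TopLSS) (O : Ends X -> Prop) : Prop :=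
  forall E, O E -> exists U, topen X U /\ coarsely_clopen (tlss X) U /\
    basic_end_open U E /\ forall E', basic_end_open U E' -> O E'.

Definition ends_continuous (X Y : TopLSS) (f : Ends X -> Ends Y) : Prop :=
  forall O, ends_open O -> ends_open (fun E => O (f E)).

Definition ends_homeomorphic (X Y : TopLSS) : Prop :=
  exists (f : Ends X -> Ends Y) (g : Ends Y -> Ends X),
    (forall E, g (f E) = E) /\ (forall E, f (g E) = E) /\
    ends_continuous f /\ ends_continuous g.

(* Main.v *)
Require Import Defs.
From Stdlib Require Import List Classical FunctionalExtensionality PropExtensionality ProofIrrelevance.

Set Implicit Arguments.
Unset Strict Implicit.

Lemma set_ext {T} (A B : T -> Prop) : (forall x, A x <-> B x) -> A = B.
Proof. intro H; apply functional_extensionality; intro x; apply propositional_extensionality; auto. Qed.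

Lemma big_inter_cons_iff {X} (a : X -> Prop) l x : big_inter (a :: l) x <-> a x /\ big_inter l x.
Proof. unfold big_inter; split; intro H. inversion H; auto. constructor; tauto. Qed.

Section Gen.
Variables (X : Type) (L : LSS X).

Lemma bounded_sub (B C : X -> Prop) : bounded L B -> (forall x, C x -> B x) -> bounded L C.
Proof.
  intros [U [HU [A [HA HB]]]] H. exists U; split; auto. exists A; split; auto.
  intros x Hx; apply HB, H, Hx.
Qed.

Lemma unb_sub (S T : X -> Prop) : ~ bounded L S -> (forall x, S x -> T x) -> ~ bounded L T.
Proof. intros H1 H2 H3; apply H1; eapply bounded_sub; eauto. Qed.

Lemma bounded_union (B1 B2 : X -> Prop) : bounded L B1 -> bounded L B2 -> bounded L (fun x => B1 x \/ B2 x).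
Proof. intros H1 H2; exact (ub_bounded_union L H1 H2). Qed.

Lemma unb_transfer (S T D : X -> Prop) : ~ bounded L S -> bounded L D ->
  (forall x, S x -> T x \/ D x) -> ~ bounded L T.
Proof. intros H1 H2 H3 H4. apply H1. eapply bounded_sub. apply (bounded_union H4 H2). exact H3. Qed.

Lemma bounded_st (U : (X -> Prop) -> Prop) (D : X -> Prop) : ub L U -> bounded L D -> bounded L (st_set D U).
Proof.
  intros HU [U0 [HU0 [B0 [HB0 HD]]]].
  exists (st_cov U0 U); split. apply ub_star; auto.
  exists (st_set B0 U); split. exists B0; split; [auto| intro y; split; auto].
  intros y [x [Hx Hxy]]. exists x; split; [apply HD|]; auto.
Qed.

Lemma cc_sim (A A' D : X -> Prop) : coarsely_clopen L A -> bounded L D ->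
  (forall x, A' x -> A x \/ D x) -> (forall x, A x -> A' x \/ D x) -> coarsely_clopen L A'.
Proof.
  intros HA HD H1 H2 U HU.
  eapply bounded_sub. apply (bounded_union (HA U HU) (bounded_st HU HD)).
  intros x [[a [Ha Hax]] [c [Hc Hcx]]].
  destruct (H1 a Ha) as [HaA|HaD].
  - destruct (classic (A c)) as [HcA|HcA].
    + destruct (H2 c HcA) as [?|HcD]; [contradiction|].
      right. exists c; split; auto.
    + left. split; [exists a|exists c]; split; auto.
  - right; exists a; auto.
Qed.

Lemma cc_inter (A B : X -> Prop) : coarsely_clopen L A -> coarsely_clopen L B ->
  coarsely_clopen L (fun x => A x /\ B x).
Proof.
  intros HA HB U HU. eapply bounded_sub. apply (bounded_union (HA U HU) (HB U HU)).
  intros x [[a [[HaA HaB] Hax]] [c [Hc Hcx]]].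
  destruct (classic (A c)) as [HcA|HcA].
  - right. split. exists a; split; auto. exists c; split; auto.
  - left. split. exists a; split; auto. exists c; split; auto.
Qed.

Lemma cc_big (a : X -> Prop) l : coarsely_clopen L a -> Forall (coarsely_clopen L) l ->
  coarsely_clopen L (big_inter (a :: l)).
Proof.
  revert a; induction l as [|b l IH]; intros a Ha Hl.
  - replace (big_inter (a :: nil)) with a; auto.
    apply set_ext; intro x; rewrite big_inter_cons_iff; assert (big_inter nil x) by constructor; tauto.
  - replace (big_inter (a :: b :: l)) with (fun x => a x /\ big_inter (b :: l) x).
    2:{ apply set_ext; intro x; cbv beta; rewrite (big_inter_cons_iff a); tauto. }
    inversion Hl; subst. apply cc_inter; auto.
Qed.

Definition meets (E : (X -> Prop) -> Prop) (A : X -> Prop) :=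
  forall l, Forall E l -> ~ bounded L (fun x => A x /\ big_inter l x).

Lemma end_elem E A : is_end L E -> E A -> coarsely_clopen L A /\ ~ bounded L A.
Proof. intros [[H _] _] HA; auto. Qed.

Lemma end_meets E A : is_end L E -> E A -> meets E A.
Proof.
  intros [[_ H] _] HA l Hl. eapply unb_sub. apply (H (A :: l)). discriminate. constructor; auto.
  intros x Hx; apply big_inter_cons_iff; auto.
Qed.

Lemma split_list (E : (X -> Prop) -> Prop) A l : Forall (fun B => E B \/ B = A) l ->
  Forall E l \/ exists l', Forall E l' /\ forall x, A x -> big_inter l' x -> big_inter l x.
Proof.
  induction l as [|b l IH]; intro H. left; constructor.
  inversion H as [|? ? Hb Hl]; subst. destruct (IH Hl) as [H1|[l' [H1 H2]]].
  - destruct Hb as [Hb|Hb]. left; constructor; auto.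
    subst b. right; exists l; split; auto. intros x Hx Hl'. apply big_inter_cons_iff; split; auto.
  - right. destruct Hb as [Hb|Hb].
    + exists (b :: l'); split. constructor; auto.
      intros x Hx Hl'. apply big_inter_cons_iff in Hl'. apply big_inter_cons_iff.
      destruct Hl'; split; auto.
    + subst b. exists l'; split; auto. intros x Hx Hl'. apply big_inter_cons_iff; split; auto.
Qed.

Lemma meets_end E A : is_end L E -> coarsely_clopen L A -> meets E A -> E A.
Proof.
  intros HE HA HM. destruct HE as [[HE1 HE2] HEmax].
  apply (HEmax (fun B => E B \/ B = A)).
  - split.
    + intros B [HB|HB]. auto. subst B. split; auto.
      specialize (HM nil (Forall_nil _)). intro Hb; apply HM. eapply bounded_sub; [exact Hb|].
      intros x [Hx _]; auto.
    + intros l Hnil Hl. destruct (split_list Hl) as [H1|[l' [H1 H2]]].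
      * apply HE2; auto.
      * intro Hb. apply (HM l' H1). eapply bounded_sub; [exact Hb|]. intros x [Hx Hx']; auto.
  - intros; left; auto.
  - right; auto.
Qed.

Lemma end_sim E A A' D : is_end L E -> E A -> coarsely_clopen L A' -> bounded L D ->
  (forall x, A x -> A' x \/ D x) -> E A'.
Proof.
  intros HE HA HA' HD H. apply meets_end; auto. intros l Hl.
  apply (unb_transfer (end_meets HE HA Hl) HD). intros x [Hx Hl']. destruct (H x Hx); auto.
Qed.

Lemma map_transfer (T : (X -> Prop) -> X -> Prop) l :
  Forall (fun A => exists D, bounded L D /\ forall x, T A x -> A x \/ D x) l ->
  forall P, ~ bounded L (fun x => P x /\ big_inter (map T l) x) ->
            ~ bounded L (fun x => P x /\ big_inter l x).
Proof.
  induction l as [|A l IH]; intros Hl P H; cbn [map] in *. auto.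
  inversion Hl as [|? ? [D [HD HA]] Hl']; subst.
  assert (H1 : ~ bounded L (fun x => (P x /\ T A x) /\ big_inter (map T l) x)).
  { eapply unb_sub; [exact H|]. intros x [Hp Hb]. apply big_inter_cons_iff in Hb. tauto. }
  specialize (IH Hl' _ H1).
  eapply unb_transfer; [exact IH|exact HD|]. intros x [[Hp HT] Hb].
  destruct (HA x HT); [left|right]; auto. split; auto. apply big_inter_cons_iff; auto.
Qed.

End Gen.

Record CE (X Y : Type) (LX : LSS X) (LY : LSS Y) (f : X -> Y) (g : Y -> X) : Prop := {
  ce_cf : coarse LX LY f; ce_lf : ls_continuous LX LY f;
  ce_cg : coarse LY LX g; ce_lg : ls_continuous LY LX g;
  ce_gf : close LX (fun x => g (f x)) (fun x => x);
  ce_fg : close LY (fun y => f (g y)) (fun y => y) }.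

Lemma CE_sym (X Y : Type) (LX : LSS X) (LY : LSS Y) (f : X -> Y) (g : Y -> X) :
  CE LX LY f g -> CE LY LX g f.
Proof. intros []; constructor; auto. Qed.

Definition emap {X Y : Type} (LY : LSS Y) (f : X -> Y) (E : (X -> Prop) -> Prop) : (Y -> Prop) -> Prop :=
  fun B => coarsely_clopen LY B /\ E (fun x => B (f x)).

Section MapsA.
Variables (X Y : Type) (LX : LSS X) (LY : LSS Y) (f : X -> Y) (g : Y -> X).
Hypothesis H : CE LX LY f g.

Lemma pre_cc (B : Y -> Prop) : coarsely_clopen LY B -> coarsely_clopen LX (fun x => B (f x)).
Proof.
  intros HB U HU. destruct (ce_lf H HU) as [V [HV HUV]].
  apply (bounded_sub (ce_cf H (HB V HV))).
  intros x [[a [Ha [C [HC [Ca Cx]]]]] [c [Hc [C' [HC' [C'c C'x]]]]]].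
  destruct (HUV C HC) as [D [HD HCD]]. destruct (HUV C' HC') as [D' [HD' HCD']].
  split.
  - exists (f a); split; auto. exists D; split; auto.
    split; apply HCD; [exists a|exists x]; split; auto.
  - exists (f c); split; auto. exists D'; split; auto.
    split; apply HCD'; [exists c|exists x]; split; auto.
Qed.

Lemma back_sim (A : X -> Prop) : coarsely_clopen LX A ->
  exists D, bounded LX D /\ forall x, (A x -> A (g (f x)) \/ D x) /\ (A (g (f x)) -> A x \/ D x).
Proof.
  intro HA. destruct (ce_gf H) as [U [HU HUx]].
  exists (fun x => st_set A U x /\ st_set (fun z => ~ A z) U x); split. apply HA; auto.
  intro x. destruct (HUx x) as [C [HC [Cx Cgx]]].
  split; intro Ha.
  - destruct (classic (A (g (f x)))) as [Hg|Hg]; [left; auto|right].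
    split. exists x; split; auto. exists C; auto.
    exists (g (f x)); split; auto. exists C; auto.
  - destruct (classic (A x)) as [Hg|Hg]; [left; auto|right].
    split. exists (g (f x)); split; auto. exists C; auto.
    exists x; split; auto. exists C; auto.
Qed.

End MapsA.

Section MapsB.
Variables (X Y : Type) (LX : LSS X) (LY : LSS Y) (f : X -> Y) (g : Y -> X).
Hypothesis H : CE LX LY f g.

Lemma emap_end E : is_end LX E -> is_end LY (emap LY f E).
Proof.
  intro HE. split. split.
  - intros B [HB HE']. split; auto. intro Hb. apply (proj2 (end_elem HE HE')). apply (ce_cf H Hb).
  - intros l Hnil Hl Hb. destruct HE as [[_ HE2] _].
    apply (HE2 (map (fun B x => B (f x)) l)).
    + destruct l; [contradiction|discriminate].
    + apply Forall_map. eapply Forall_impl; [|exact Hl]. intros B [_ HB]; exact HB.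
    + eapply bounded_sub. apply (ce_cf H Hb). intros x Hx.
      unfold big_inter in *. apply Forall_map in Hx. exact Hx.
  - intros E' HE' Hsub B HB'.
    assert (HccB : coarsely_clopen LY B) by (apply (proj1 (proj1 HE' B HB'))).
    split; auto.
    apply (meets_end HE). apply (pre_cc H); auto.
    intros l Hl.
    set (l2 := map (fun A y => A (g y)) l).
    assert (Hl2 : Forall E' l2).
    { unfold l2. apply Forall_map. eapply Forall_impl; [|exact Hl]. intros A HA. apply Hsub.
      destruct (end_elem HE HA) as [HAcc _].
      split. apply (pre_cc (CE_sym H)); auto.
      destruct (back_sim H HAcc) as [D [HD HD']].
      apply (end_sim (D:=D) HE HA); [| exact HD| intros x Hx; apply HD'; auto].
      exact (pre_cc H (pre_cc (CE_sym H) HAcc)). }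
    assert (Hc : ~ bounded LY (big_inter (B :: l2))).
    { apply (proj2 HE'); [discriminate| constructor; auto]. }
    assert (Hcc : coarsely_clopen LY (big_inter (B :: l2))).
    { apply cc_big; auto. eapply Forall_impl; [|exact Hl2]. intros A HA.
      apply (proj1 (proj1 HE' A HA)). }
    set (C := big_inter (B :: l2)) in *.
    destruct (back_sim (CE_sym H) Hcc) as [D [HD HD']].
    assert (H1 : ~ bounded LY (fun y => C (f (g y)))).
    { eapply unb_transfer; [exact Hc|exact HD|intros y Hy; apply HD'; auto]. }
    assert (H2 : ~ bounded LX (fun x => C (f x))).
    { intro Hb; apply H1; apply (ce_cg H Hb). }
    apply (map_transfer (T := fun A x => A (g (f x)))).
    + eapply Forall_impl; [|exact Hl]. intros A HA.
      destruct (end_elem HE HA) as [HAcc _].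
      destruct (back_sim H HAcc) as [D0 [HD0 HD0']].
      exists D0; split; auto. intros x Hx; apply HD0'; auto.
    + eapply unb_sub; [exact H2|]. intros x Hx. unfold C in Hx.
      apply big_inter_cons_iff in Hx. destruct Hx as [HBx Hlx]. split; auto.
      unfold big_inter, l2 in *. apply Forall_map in Hlx. apply Forall_map. exact Hlx.
Qed.

Lemma emap_back E : is_end LX E -> emap LX g (emap LY f E) = E.
Proof.
  intro HE. apply functional_extensionality; intro A; apply propositional_extensionality.
  unfold emap. split.
  - intros [HA [_ HE']]. destruct (back_sim H HA) as [D [HD HD']].
    apply (end_sim HE HE' HA HD). intros x Hx. apply HD'; auto.
  - intro HA. destruct (end_elem HE HA) as [HAcc _]. destruct (back_sim H HAcc) as [D [HD HD']].
    split; auto. split. apply (pre_cc (CE_sym H)); auto.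
    apply (end_sim (D:=D) HE HA); [| exact HD| intros x Hx; apply HD'; auto].
    exact (pre_cc H (pre_cc (CE_sym H) HAcc)).
Qed.

End MapsB.

Section Top.
Variables (X Y : TopLSS) (f : tcar X -> tcar Y) (g : tcar Y -> tcar X).
Hypothesis H : CE (tlss X) (tlss Y) f g.

Definition emapT (E : Ends X) : Ends Y :=
  exist _ (emap (tlss Y) f (proj1_sig E)) (emap_end H (proj2_sig E)).

Lemma emapT_cont : ends_continuous emapT.
Proof.
  intros O HO E HOE.
  destruct (HO _ HOE) as [U [HUo [HUcc [HUE HUO]]]].
  destruct HUE as [_ HEA].
  set (A := fun x => U (f x)) in *.
  assert (HAcc : coarsely_clopen (tlss X) A) by (apply (pre_cc H); auto).
  destruct (topen_ub X) as [W [HW HWo]].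
  set (V := fun y => exists B, (W B /\ exists x, A x /\ B x) /\ B y).
  assert (HVo : topen X V) by (apply topen_union; intros B [HB _]; auto).
  set (D := fun x => st_set A W x /\ st_set (fun z => ~ A z) W x).
  assert (HD : bounded (tlss X) D) by (apply HAcc; auto).
  assert (H1 : forall x, A x -> V x \/ D x).
  { intros x Hx. left. destruct (ub_is_cover _ _ HW x) as [B [HB Bx]].
    exists B; split; [split; [auto| exists x; auto]| auto]. }
  assert (H2 : forall x, V x -> A x \/ D x).
  { intros y [B [[HB [x [Hx Bx]]] By]]. destruct (classic (A y)); [left; auto| right].
    split. exists x; split; auto. exists B; auto. exists y; split; auto. exists B; auto. }
  assert (HVcc : coarsely_clopen (tlss X) V) by (apply (cc_sim HAcc HD); auto).
  exists V. split; auto. split; auto. split.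
  - apply (end_sim (D:=D) (proj2_sig E) HEA); auto.
  - intros E' HE'. apply HUO. split; auto. apply (end_sim (proj2_sig E') HE' HAcc HD H2).
Qed.

End Top.

Lemma ends_eq (Z : TopLSS) (a b : Ends Z) : proj1_sig a = proj1_sig b -> a = b.
Proof. destruct a, b; simpl; intro; subst; f_equal; apply proof_irrelevance. Qed.

Theorem corollary2p27 (X Y : TopLSS) :
  coarsely_equivalent (tlss X) (tlss Y) -> ends_homeomorphic X Y.
Proof.
  intros [f [cf [lf [g [cg [lg [gf fg]]]]]]].
  assert (H : CE (tlss X) (tlss Y) f g) by (constructor; auto).
  exists (emapT H), (emapT (CE_sym H)).
  split; [|split; [|split]].
  - intro E. apply ends_eq. simpl. apply (emap_back H (proj2_sig E)).
  - intro E. apply ends_eq. simpl. apply (emap_back (CE_sym H) (proj2_sig E)).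
  - apply emapT_cont.
  - apply emapT_cont.
Qed.
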